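(* For every integer $T=6k$ with $k\ge 1$ and every $\sigma\in\mathfrak S_3$, the vector $\sigma c$ with $c=[10k-1,\,4k,\,-8k+2,\,-2k+1,\,-2k+1,\,4k]$ defines a facet of $P^T$.
   Context: For an integer $T\ge 2$, let $\Omega_T$ be the set of words $w=s_1s_2\cdots s_T$ over $\{1,2,3\}$ with $s_l\neq s_{l+1}$ for $l=1,\dots,T-1$. For $w\in\Omega_T$ and an ordered pair $ij$, $i\neq j$, let $x_{ij}(w)$ be the number of indices $1\le l\le T-1$ with $s_ls_{l+1}=ij$. Vectors of $\mathbb R^6$ are indexed in the order $[x_{12},x_{13},x_{21},x_{23},x_{31},x_{32}]$. Let $a_w=[x_{12}(w),\dots,x_{32}(w)]$ and $P^T=\mathrm{conv}\{a_w:w\in\Omega_T\}$. $\mathfrak S_3$ acts on $\mathbb R^6$ by $(\sigma c)_{ij}=c_{\sigma(i)\sigma(j)}$. A vector $c$ defines a facet of $P^T$ if $c\cdot a_w\ge0$ for all $w\in\Omega_T$ and $\{x\in P^T: c\cdot x=0\}$ is a facet of $P^T$. *)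

(* Defs.v *)
(* Letters 1,2,3 are encoded as 0,1,2 : 'I_3. *)
From mathcomp Require Import all_boot all_order all_algebra all_fingroup.
Set Implicit Arguments. Unset Strict Implicit. Unset Printing Implicit Defensive.
Import Order.TTheory GRing.Theory Num.Theory.
Local Open Scope ring_scope.

Section Defs.
Variable R : realFieldType.

(* a word s_1 ... s_T, stored 0-indexed *)
Definition letter {T : nat} (w : T.-tuple 'I_3) (l : nat) : 'I_3 := nth ord0 w l.

Definition valid_word {T : nat} (w : T.-tuple 'I_3) : bool :=
  all (fun l => letter w l != letter w l.+1) (iota 0 T.-1).

Definition xcount {T : nat} (w : T.-tuple 'I_3) (i j : 'I_3) : nat :=
  count (fun l => (letter w l == i) && (letter w l.+1 == j)) (iota 0 T.-1).

(* coordinate order [x12, x13, x21, x23, x31, x32] *)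
Definition pair_of (m : 'I_6) : 'I_3 * 'I_3 :=
  match val m with
  | 0 => (inord 0, inord 1)
  | 1 => (inord 0, inord 2)
  | 2 => (inord 1, inord 0)
  | 3 => (inord 1, inord 2)
  | 4 => (inord 2, inord 0)
  | _ => (inord 2, inord 1)
  end.

Definition vec_of (f : 'I_3 -> 'I_3 -> R) : 'rV[R]_6 :=
  \row_m f (pair_of m).1 (pair_of m).2.

Definition a_vec {T : nat} (w : T.-tuple 'I_3) : 'rV[R]_6 :=
  vec_of (fun i j => (xcount w i j)%:R).

Definition PT (T : nat) (x : 'rV[R]_6) : Prop :=
  exists lam : T.-tuple 'I_3 -> R,
    (forall w, 0 <= lam w) /\
    (forall w, ~~ valid_word w -> lam w = 0) /\
    \sum_w lam w = 1 /\
    x = \sum_w lam w *: a_vec w.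

Definition dotv (c x : 'rV[R]_6) : R := \sum_m c 0 m * x 0 m.

Definition affdim (S : 'rV[R]_6 -> Prop) (d : nat) : Prop :=
  exists U : 'M[R]_6,
    (forall x y, S x -> S y -> (x - y <= U)%MS) /\
    (forall V : 'M[R]_6, (forall x y, S x -> S y -> (x - y <= V)%MS) -> (U <= V)%MS) /\
    \rank U = d.

Definition defines_facet (T : nat) (c : 'rV[R]_6) : Prop :=
  (forall w : T.-tuple 'I_3, valid_word w -> 0 <= dotv c (a_vec w)) /\
  let F := fun x => PT T x /\ dotv c x = 0 in
  (exists x, F x) /\
  exists dP dF, affdim (PT T) dP /\ affdim F dF /\ dF.+1 = dP.

Definition act_pairs (s : 'S_3) (f : 'I_3 -> 'I_3 -> R) : 'I_3 -> 'I_3 -> R :=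
  fun i j => f (s i) (s j).

Definition c12 (k : nat) (i j : 'I_3) : R :=
  let kk : R := k%:R in
  match val i, val j with
  | 0, 1 => 10 * kk - 1
  | 0, 2 => 4 * kk
  | 1, 0 => - 8 * kk + 2
  | 1, 2 => - 2 * kk + 1
  | 2, 0 => - 2 * kk + 1
  | 2, 1 => 4 * kk
  | _, _ => 0
  end.

End Defs.

(* Main.v *)
Require Import Defs.
From mathcomp Require Import all_boot all_order all_algebra all_fingroup.
From mathcomp Require Import ring lra zify.
Import Order.TTheory GRing.Theory Num.Theory.
Local Open Scope ring_scope.
Set Implicit Arguments. Unset Strict Implicit. Unset Printing Implicit Defensive.

Definition o0 : 'I_3 := @Ordinal 3 0 isT.
Definition o1 : 'I_3 := @Ordinal 3 1 isT.
Definition o2 : 'I_3 := @Ordinal 3 2 isT.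
Definition j0 : 'I_6 := @Ordinal 6 0 isT.
Definition j1 : 'I_6 := @Ordinal 6 1 isT.
Definition j2 : 'I_6 := @Ordinal 6 2 isT.
Definition j3 : 'I_6 := @Ordinal 6 3 isT.
Definition j4 : 'I_6 := @Ordinal 6 4 isT.
Definition j5 : 'I_6 := @Ordinal 6 5 isT.

Lemma ord3P (a : 'I_3) : [\/ a = o0, a = o1 | a = o2].
Proof.
case: a => [[|[|[|n]]] H]; [constructor 1|constructor 2|constructor 3|done];
  exact: val_inj.
Qed.

Lemma inord0 : inord 0 = o0. Proof. by apply: val_inj; rewrite /= inordK. Qed.
Lemma inord1 : inord 1 = o1. Proof. by apply: val_inj; rewrite /= inordK. Qed.
Lemma inord2 : inord 2 = o2. Proof. by apply: val_inj; rewrite /= inordK. Qed.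

Definition pc (m : 'I_6) : 'I_3 * 'I_3 :=
  match val m with
  | 0 => (o0, o1) | 1 => (o0, o2) | 2 => (o1, o0) | 3 => (o1, o2) | 4 => (o2, o0)
  | _ => (o2, o1) end.

Lemma pairE m : pair_of m = pc m.
Proof.
rewrite /pair_of /pc; case: (val m) => [|[|[|[|[|n]]]]];
  by rewrite ?inord0 ?inord1 ?inord2.
Qed.

Lemma vecE (R : realFieldType) (f : 'I_3 -> 'I_3 -> R) i m :
  vec_of f i m = f (pc m).1 (pc m).2.
Proof. by rewrite /vec_of mxE pairE. Qed.

Lemma sum6 (R : realFieldType) (F : 'I_6 -> R) :
  \sum_(m < 6) F m = F j0 + F j1 + F j2 + F j3 + F j4 + F j5.
Proof.
rewrite !big_ord_recl big_ord0 addr0 !addrA.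
by do 5?[congr (_ + _)]; congr F; apply: val_inj.
Qed.

Definition ev (R : realFieldType) (a b : 'I_3) : 'rV[R]_6 :=
  vec_of (fun i j => ((a == i) && (b == j))%:R).

Lemma dot_ev (R : realFieldType) (f : 'I_3 -> 'I_3 -> R) a b :
  a != b -> dotv (vec_of f) (ev R a b) = f a b.
Proof.
rewrite /dotv sum6 /ev !vecE /=.
by case: (ord3P a) => ->; case: (ord3P b) => -> //= _; ring.
Qed.

Fixpoint pcnt (P : 'I_3 -> 'I_3 -> bool) (s : seq 'I_3) : nat :=
  match s with a :: ((b :: _) as s') => P a b + pcnt P s' | _ => 0%N end.

Lemma count_pairs (P : 'I_3 -> 'I_3 -> bool) (s : seq 'I_3) :
  count (fun l => P (nth ord0 s l) (nth ord0 s l.+1)) (iota 0 (size s).-1) = pcnt P s.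
Proof.
elim: s => [|a s IH] //; case: s IH => [|b s] IH //.
rewrite (_ : pcnt P [:: a, b & s] = P a b + pcnt P (b :: s))%N // -IH.
rewrite [size _]/= [iota _ _]/=  (iotaDl 1 0 (size s)) /= count_map.
by [].
Qed.

Lemma all_pairs (P : 'I_3 -> 'I_3 -> bool) (s : seq 'I_3) :
  all (fun l => P (nth ord0 s l) (nth ord0 s l.+1)) (iota 0 (size s).-1) = sorted P s.
Proof.
elim: s => [|a s IH] //; case: s IH => [|b s] IH //.
rewrite (_ : sorted P [:: a, b & s] = P a b && sorted P (b :: s)) // -IH.
rewrite [size _]/= [iota _ _]/= (iotaDl 1 0 (size s)) /= all_map.
by [].
Qed.

Definition neq3 (a b : 'I_3) := a != b.

Lemma validE T (w : T.-tuple 'I_3) : valid_word w = sorted neq3 w.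
Proof. by rewrite /valid_word -all_pairs size_tuple. Qed.

Lemma xcountE T (w : T.-tuple 'I_3) i j :
  xcount w i j = pcnt (fun a b => (a == i) && (b == j)) w.
Proof. by rewrite /xcount -count_pairs size_tuple. Qed.

Fixpoint avs (R : realFieldType) (s : seq 'I_3) : 'rV[R]_6 :=
  match s with a :: ((b :: _) as s') => ev R a b + avs R s' | _ => 0 end.

Lemma avsE (R : realFieldType) s :
  avs R s = vec_of (fun i j => (pcnt (fun a b => (a == i) && (b == j)) s)%:R).
Proof.
elim: s => [|a s IH]; first by apply/rowP => m; rewrite !mxE.
case: s IH => [|b s] IH; first by apply/rowP => m; rewrite !mxE.
rewrite (_ : avs R [:: a, b & s] = ev R a b + avs R (b :: s)) // IH; apply/rowP => m; rewrite !mxE natrD.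
by [].
Qed.

Lemma a_vec_avs (R : realFieldType) T (w : T.-tuple 'I_3) : a_vec R w = avs R w.
Proof.
rewrite avsE /a_vec; apply/rowP => m; rewrite !vecE.
by rewrite xcountE.
Qed.

Lemma dotvD (R : realFieldType) (c x y : 'rV[R]_6) :
  dotv c (x + y) = dotv c x + dotv c y.
Proof. by rewrite /dotv -big_split; apply: eq_bigr => m _; rewrite mxE mulrDr. Qed.

Lemma dotvZ (R : realFieldType) (c x : 'rV[R]_6) a :
  dotv c (a *: x) = a * dotv c x.
Proof.
by rewrite /dotv mulr_sumr; apply: eq_bigr => m _; rewrite mxE mulrCA.
Qed.

Lemma dotvN (R : realFieldType) (c x : 'rV[R]_6) : dotv c (- x) = - dotv c x.
Proof. by rewrite -scaleN1r dotvZ mulN1r. Qed.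

Lemma dotvB (R : realFieldType) (c x y : 'rV[R]_6) :
  dotv c (x - y) = dotv c x - dotv c y.
Proof. by rewrite dotvD dotvN. Qed.

Lemma dotv0 (R : realFieldType) (c : 'rV[R]_6) : dotv c 0 = 0.
Proof. by rewrite /dotv big1 // => m _; rewrite mxE mulr0. Qed.

Lemma dotv_sum (R : realFieldType) (I : finType) (c : 'rV[R]_6) (F : I -> 'rV[R]_6) :
  dotv c (\sum_i F i) = \sum_i dotv c (F i).
Proof.
rewrite /dotv exchange_big /=; apply: eq_bigr => m _.
by rewrite summxE mulr_sumr.
Qed.

Fixpoint ps (R : realFieldType) (f : 'I_3 -> 'I_3 -> R) (s : seq 'I_3) : R :=
  match s with a :: ((b :: _) as s') => f a b + ps f s' | _ => 0 end.

Lemma dot_avs (R : realFieldType) (f : 'I_3 -> 'I_3 -> R) s :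
  sorted neq3 s -> dotv (vec_of f) (avs R s) = ps f s.
Proof.
elim: s => [|a s IH]; first by rewrite /= dotv0.
case: s IH => [|b s] IH; first by rewrite /= dotv0.
move=> /= /andP [ab Hs]; rewrite dotvD dot_ev // IH //.
Qed.

Definition phi (a : 'I_3) : nat := match val a with 0 => 0 | 1 => 2 | _ => 1 end%N.
Definition redge (a b : 'I_3) : bool :=
  match val a, val b with 0, 1 | 1, 2 | 2, 0 => true | _, _ => false end%N.

Lemma edge_id (R : realFieldType) (k : nat) (a b : 'I_3) : a != b ->
  3 * c12 R k a b + (12 * k%:R - 2) * (phi a)%:R =
  2 + (12 * k%:R - 2) * (phi b)%:R + (6 * k%:R - 1) * (redge a b)%:R.
Proof.
by case: (ord3P a) => ->; case: (ord3P b) => -> //= _; rewrite /c12 /phi /redge /=; ring.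
Qed.

Lemma edge_mod (a b : 'I_3) : a != b -> ((phi a + 1 + redge a b) %% 3 = phi b)%N.
Proof. by case: (ord3P a) => ->; case: (ord3P b) => ->. Qed.

Lemma phi_lt (a : 'I_3) : (phi a < 3)%N.
Proof. by case: (ord3P a) => ->. Qed.

Lemma ps_formula (R : realFieldType) (k : nat) s a : sorted neq3 (a :: s) ->
  3 * ps (c12 R k) (a :: s) + (12 * k%:R - 2) * (phi a)%:R =
  2 * (size s)%:R + (12 * k%:R - 2) * (phi (last a s))%:R
  + (6 * k%:R - 1) * (pcnt redge (a :: s))%:R.
Proof.
elim: s a => [|b s IH] a; first by move=> _ /=; ring.
move=> H; have /andP [ab Hs] : neq3 a b && sorted neq3 (b :: s) by [].
have := IH b Hs; have := edge_id R k ab.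
rewrite (_ : ps (c12 R k) [:: a, b & s] = c12 R k a b + ps (c12 R k) (b :: s)) //.
rewrite (_ : pcnt redge [:: a, b & s] = redge a b + pcnt redge (b :: s))%N //.
rewrite !natrD /= -/(last b s) => E1 E2.
rewrite -/(ps _ _) in E2.
lra.
Qed.

Lemma mod_formula s a : sorted neq3 (a :: s) ->
  ((phi a + size s + pcnt redge (a :: s)) %% 3 = phi (last a s))%N.
Proof.
elim: s a => [|b s IH] a.
  by move=> _ /=; rewrite addn0 addn0 modn_small // phi_lt.
move=> H; have /andP [ab Hs] : neq3 a b && sorted neq3 (b :: s) by [].
have := IH b Hs; have := edge_mod ab.
rewrite (_ : pcnt redge [:: a, b & s] = redge a b + pcnt redge (b :: s))%N //.
rewrite [size _]/= -/(last b s) => E1 E2.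
have := phi_lt a; have := phi_lt b; have := phi_lt (last b s).
change (last a (b :: s)) with (last b s); change (size (b :: s)) with (size s).+1; lia.
Qed.

Lemma nonneg (R : realFieldType) (k : nat) s : (1 <= k)%N -> sorted neq3 s ->
  size s = (6 * k)%N -> 0 <= ps (c12 R k) s.
Proof.
case: s => [|a s] k1; first by move=> _ /=; lia.
move=> Hs Hsz.
have Hsz1 : (size s).+1 = (6 * k)%N by [].
have F := ps_formula R k Hs.
have M := mod_formula Hs.
have pa3 := phi_lt a; have pl3 := phi_lt (last a s).
have H : (2 * phi a <= 2 + 2 * phi (last a s) + pcnt redge (a :: s))%N.
  lia.
have Hs' : (size s)%:R = 6 * k%:R - 1 :> R.
  have -> : size s = (6 * k - 1)%N by lia.
  by rewrite natrB ?natrM //; lia.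
have HR : (2 * phi a)%:R <= (2 + 2 * phi (last a s) + pcnt redge (a :: s))%:R :> R.
  by rewrite ler_nat.
rewrite !natrD in HR.
have kR : 1 <= k%:R :> R by rewrite ler1n.
rewrite Hs' in F.
nra.
Qed.

Lemma avs_cat (R : realFieldType) a s1 b s2 :
  avs R (a :: s1 ++ b :: s2) = avs R (a :: s1) + ev R (last a s1) b + avs R (b :: s2).
Proof.
elim: s1 a => [|c s1 IH] a.
  rewrite cat0s (_ : avs R [:: a, b & s2] = ev R a b + avs R (b :: s2)) //.
  by rewrite (_ : avs R [:: a] = 0) // add0r.
rewrite cat_cons (_ : avs R [:: a, c & s1 ++ b :: s2] = ev R a c + avs R (c :: s1 ++ b :: s2)) //.
rewrite IH (_ : avs R [:: a, c & s1] = ev R a c + avs R (c :: s1)) //.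
by rewrite !addrA.
Qed.

Lemma sorted_cat a s1 b s2 :
  sorted neq3 (a :: s1 ++ b :: s2) =
  [&& sorted neq3 (a :: s1), neq3 (last a s1) b & sorted neq3 (b :: s2)].
Proof. by rewrite /= cat_path /=. Qed.

Definition Mid (n : nat) : seq 'I_3 := flatten (nseq n [:: o1; o0; o2]).

Definition cyc (R : realFieldType) : 'rV[R]_6 := ev R o1 o0 + ev R o0 o2 + ev R o2 o1.

Lemma avs_W (R : realFieldType) n a h t : last a h = o2 ->
  avs R (a :: h ++ Mid n ++ o1 :: t) =
  avs R (a :: h) + avs R (o1 :: t) + ev R o2 o1 + n%:R *: cyc R.
Proof.
elim: n h => [|n IH] h Hl.
  rewrite (_ : Mid 0 = [::]) // cat0s avs_cat Hl.
  by apply/rowP => m; rewrite !mxE; ring.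
rewrite (_ : Mid n.+1 = [:: o1; o0; o2] ++ Mid n) // -(catA [:: o1; o0; o2]) (catA h).
rewrite IH; last by rewrite last_cat.
rewrite avs_cat Hl.
rewrite (_ : avs R [:: o1; o0; o2] = ev R o1 o0 + (ev R o0 o2 + 0)) //.
rewrite /cyc; apply/rowP => m; rewrite !mxE -natr1; ring.
Qed.

Lemma sorted_W n a h t : last a h = o2 -> sorted neq3 (a :: h) ->
  sorted neq3 (o1 :: t) -> sorted neq3 (a :: h ++ Mid n ++ o1 :: t).
Proof.
elim: n h => [|n IH] h Hl H1 H2.
  by rewrite (_ : Mid 0 = [::]) // cat0s sorted_cat H1 H2 Hl.
rewrite (_ : Mid n.+1 = [:: o1; o0; o2] ++ Mid n) // -(catA [:: o1; o0; o2]) (catA h).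
rewrite IH //; first by rewrite last_cat.
by rewrite sorted_cat H1 Hl.
Qed.

Lemma size_Mid n : size (Mid n) = (3 * n)%N.
Proof. elim: n => //= n IH; rewrite IH; lia. Qed.

Lemma size_W n a h t :
  size (a :: h ++ Mid n ++ o1 :: t) = (size h + 3 * n + size t + 2)%N.
Proof. rewrite /= !size_cat size_Mid /=; lia. Qed.

Lemma PT_vert (R : realFieldType) T (w : T.-tuple 'I_3) :
  valid_word w -> PT T (a_vec R w).
Proof.
move=> Hw; exists (fun w' => (w' == w)%:R); split; [|split; [|split]].
- by move=> w'; rewrite ler0n.
- by move=> w'; case: eqP => // ->; rewrite Hw.
- rewrite (bigD1 w) //= eqxx big1 ?addr0 // => w' /negPf -> //.
- rewrite (bigD1 w) //= eqxx scale1r big1 ?addr0 // => w' /negPf ->.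
  by rewrite scale0r.
Qed.

Lemma PT_dot (R : realFieldType) T (u x : 'rV[R]_6) r :
  (forall w : T.-tuple 'I_3, valid_word w -> dotv u (a_vec R w) = r) ->
  PT T x -> dotv u x = r.
Proof.
move=> H [lam [H0 [H1 [H2 ->]]]].
rewrite dotv_sum (eq_bigr (fun w => lam w * r)).
  by rewrite -mulr_suml H2 mul1r.
move=> w _; rewrite dotvZ; case: (boolP (valid_word w)) => Hw; first by rewrite H.
by rewrite H1 // !mul0r.
Qed.

Lemma ps_one (R : realFieldType) s : ps (fun _ _ => 1 : R) s = ((size s).-1)%:R.
Proof.
elim: s => [|a s IH] //; case: s IH => [|b s] IH //.
rewrite (_ : ps _ [:: a, b & s] = 1 + ps (fun _ _ => 1 : R) (b :: s)) // IH.
by rewrite /= -natr1 addrC.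
Qed.

Definition ones (R : realFieldType) : 'rV[R]_6 := vec_of (fun _ _ => 1).

Lemma PT_tot (R : realFieldType) T x : PT T x -> dotv (ones R) x = (T.-1)%:R.
Proof.
apply: PT_dot => w Hw.
by rewrite a_vec_avs dot_avs -?validE // ps_one size_tuple.
Qed.

Lemma mul_pid_row (R : realFieldType) r (u : 'rV[R]_6) :
  (forall j : 'I_6, (r <= j)%N -> u 0 j = 0) -> u *m pid_mx r = u.
Proof.
move=> H; apply/rowP => j; rewrite mxE (bigD1 j) //= big1 ?addr0.
  rewrite mxE eqxx /=; case: ltnP => Hj; first by rewrite mulr1.
  by rewrite H // mul0r.
move=> i Hij; rewrite mxE (_ : (nat_of_ord i == nat_of_ord j) = false) ?mulr0 //; exact: negPf Hij.
Qed.

Lemma affdim_crit (R : realFieldType) (S : 'rV[R]_6 -> Prop) (r : nat) (Q Qi : 'M[R]_6) :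
  (r <= 6)%N -> Q *m Qi = 1%:M ->
  (forall x y, S x -> S y -> forall j : 'I_6, (r <= j)%N -> ((x - y) *m Qi) 0 j = 0) ->
  (forall i : 'I_6, (i < r)%N -> exists x y, [/\ S x, S y & row i Q = x - y]) ->
  affdim S r.
Proof.
move=> r6 QQi H1 H2.
have QiQ := mulmx1C QQi.
have [Qu _] := mulmx1_unit QQi.
exists (pid_mx r *m Q); split; [|split].
- move=> x y Sx Sy.
  have -> : x - y = ((x - y) *m Qi *m pid_mx r) *m Q.
    rewrite mul_pid_row; last exact: H1.
    by rewrite -mulmxA QiQ mulmx1.
  by rewrite -mulmxA submxMl.
- move=> V HV; apply/row_subP => i; rewrite row_mul.
  case: (ltnP i r) => Hi.
    have -> : row i (pid_mx r : 'M[R]_6) = delta_mx 0 i.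
      apply/rowP => j; rewrite !mxE /= Hi andbT eq_sym.
      by [].
    rewrite (_ : delta_mx 0 i *m Q = row i Q); last by rewrite rowE.
    have [x [y [Sx Sy ->]]] := H2 i Hi; exact: HV.
  have -> : row i (pid_mx r : 'M[R]_6) = 0.
    by apply/rowP => j; rewrite !mxE ltnNge Hi andbF.
  by rewrite mul0mx sub0mx.
- by rewrite mxrankMfree ?row_free_unit // rank_pid_mx.
Qed.

Definition idx (a b : 'I_3) : 'I_6 :=
  match val a, val b with
  | 0, 1 => j0 | 0, 2 => j1 | 1, 0 => j2 | 1, 2 => j3 | 2, 0 => j4 | _, _ => j5 end%N.

Lemma pc_idx a b : a != b -> pc (idx a b) = (a, b).
Proof. by case: (ord3P a) => ->; case: (ord3P b) => ->. Qed.

Lemma idx_pc m : idx (pc m).1 (pc m).2 = m.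
Proof. by case: m => [[|[|[|[|[|[|m]]]]]] Hm] //; apply: val_inj. Qed.

Lemma pc_neq m : (pc m).1 != (pc m).2.
Proof. by case: m => [[|[|[|[|[|[|m]]]]]] Hm]. Qed.

Definition pif (s : 'S_3) (m : 'I_6) : 'I_6 := idx (s (pc m).1) (s (pc m).2).

Lemma pif_inj s : injective (pif s).
Proof.
move=> m1 m2 H; have := congr1 pc H.
rewrite /pif !pc_idx ?(inj_eq perm_inj) ?pc_neq // => [[]] /perm_inj E1 /perm_inj E2.
by rewrite -(idx_pc m1) -(idx_pc m2) E1 E2.
Qed.

Definition pis (s : 'S_3) : 'S_6 := perm (@pif_inj s).

Lemma vec_act (R : realFieldType) s (f : 'I_3 -> 'I_3 -> R) :
  vec_of (act_pairs s f) = col_perm (pis s) (vec_of f).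
Proof.
apply/rowP => m; rewrite vecE mxE vecE permE /pif pc_idx ?(inj_eq perm_inj) ?pc_neq //.
Qed.

Lemma pcnt_map (P Q : 'I_3 -> 'I_3 -> bool) (f : 'I_3 -> 'I_3) s :
  (forall a b, P (f a) (f b) = Q a b) -> pcnt P (map f s) = pcnt Q s.
Proof.
move=> H; elim: s => [|a s IH] //; case: s IH => [|b s] IH //.
rewrite (_ : pcnt P (map f [:: a, b & s]) = P (f a) (f b) + pcnt P (map f (b :: s)))%N //.
by rewrite IH H.
Qed.

Lemma permV_eq (s : 'S_3) a i : ((s^-1)%g a == i) = (a == s i).
Proof. by apply/eqP/eqP => [<-|->]; rewrite ?permKV ?permK. Qed.

Lemma a_vec_map (R : realFieldType) T (s : 'S_3) (w : T.-tuple 'I_3) :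
  a_vec R (map_tuple (s^-1)%g w) = col_perm (pis s) (a_vec R w).
Proof.
apply/rowP => m; rewrite /a_vec vecE mxE vecE permE /pif pc_idx ?(inj_eq perm_inj) ?pc_neq //=.
rewrite !xcountE /=; congr (_ %:R); apply: pcnt_map => a b.
by rewrite !permV_eq.
Qed.

Lemma valid_map T (f : 'I_3 -> 'I_3) (w : T.-tuple 'I_3) :
  injective f -> valid_word (map_tuple f w) = valid_word w.
Proof.
move=> fi; rewrite !validE /=.
case: (tval w) => [|a s] //=; rewrite path_map; apply: eq_path => x y.
by rewrite /neq3 /= (inj_eq fi).
Qed.

Lemma dotv_perm (R : realFieldType) (p : 'S_6) (c x : 'rV[R]_6) :
  dotv (col_perm p c) (col_perm p x) = dotv c x.
Proof.
rewrite /dotv [RHS](reindex_inj (@perm_inj _ p)) /=.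
by apply: eq_bigr => m _; rewrite !mxE.
Qed.

Lemma col_permVK (R : realFieldType) (p : 'S_6) (x : 'rV[R]_6) :
  col_perm (p^-1)%g (col_perm p x) = x.
Proof. by rewrite -col_permM mulVg col_perm1. Qed.

Lemma col_permKV (R : realFieldType) (p : 'S_6) (x : 'rV[R]_6) :
  col_perm p (col_perm (p^-1)%g x) = x.
Proof. by rewrite -col_permM mulgV col_perm1. Qed.

Lemma PT_map (R : realFieldType) T (p : 'S_6) (tau tau' : T.-tuple 'I_3 -> T.-tuple 'I_3) (x : 'rV[R]_6) :
  cancel tau tau' -> cancel tau' tau ->
  (forall w, valid_word (tau w) = valid_word w) ->
  (forall w, a_vec R (tau w) = col_perm p (a_vec R w)) ->
  PT T x -> PT T (col_perm p x).
Proof.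
move=> K1 K2 Hv Ha [lam [H0 [H1 [H2 ->]]]].
exists (fun w => lam (tau' w)); split; [|split; [|split]].
- by move=> w; apply: H0.
- move=> w Hw; apply: H1; apply: contra Hw; rewrite -{2}(K2 w) Hv //.
- by rewrite -H2 [RHS](reindex_inj (can_inj K2)).
- rewrite linear_sum [RHS](reindex_inj (can_inj K1)) /=; apply: eq_bigr => w _.
  by rewrite K1 Ha linearZ.
Qed.

Lemma affdim_map (R : realFieldType) (S S' : 'rV[R]_6 -> Prop) (M N : 'M[R]_6) d :
  M *m N = 1%:M -> (forall x, S' x <-> S (x *m N)) -> affdim S d -> affdim S' d.
Proof.
move=> MN HS [U [H1 [H2 H3]]].
have NM := mulmx1C MN.
have [Mu _] := mulmx1_unit MN.
exists (U *m M); split; [|split].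
- move=> x y /HS Sx /HS Sy.
  have -> : x - y = (x *m N - y *m N) *m M by rewrite -mulmxBl -mulmxA NM mulmx1.
  by rewrite submxMr // H1.
- move=> V HV.
  have : (U <= V *m N)%MS.
    apply: H2 => a b Sa Sb.
    have -> : a - b = (a *m M - b *m M) *m N by rewrite -mulmxBl -mulmxA MN mulmx1.
    rewrite submxMr // HV // HS -mulmxA MN mulmx1 //.
  move=> /(submxMr M); rewrite -mulmxA NM mulmx1 //.
- by rewrite mxrankMfree ?row_free_unit.
Qed.

Lemma facet_transfer (R : realFieldType) T (c : 'rV[R]_6) (p : 'S_6)
  (tau tau' : T.-tuple 'I_3 -> T.-tuple 'I_3) :
  cancel tau tau' -> cancel tau' tau ->
  (forall w, valid_word (tau w) = valid_word w) ->
  (forall w, a_vec R (tau w) = col_perm p (a_vec R w)) ->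
  defines_facet T c -> defines_facet T (col_perm p c).
Proof.
move=> K1 K2 Hv Ha [Hnn [[x0 Fx0] [dP [dF [HP [HF Hd]]]]]].
have Hv' w : valid_word (tau' w) = valid_word w by rewrite -{2}(K2 w) Hv.
have Ha' w : a_vec R (tau' w) = col_perm (p^-1)%g (a_vec R w).
  by rewrite -{2}(K2 w) Ha col_permVK.
have PTf (x : 'rV[R]_6) : PT T x -> PT T (col_perm p x).
  move=> Hx; exact: (PT_map K1 K2 Hv Ha Hx).
have PTb (x : 'rV[R]_6) : PT T x -> PT T (col_perm (p^-1)%g x).
  move=> Hx; exact: (PT_map K2 K1 Hv' Ha' Hx).
split.
  move=> w Hw; rewrite -(K2 w) Ha dotv_perm; apply: Hnn.
  by rewrite -Hv K2.
split.
  exists (col_perm p x0); case: Fx0 => H1 H2; split; first exact: PTf.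
  by rewrite dotv_perm.
exists dP, dF; split => //; split => //.
apply: (affdim_map (M := perm_mx (p^-1)%g) (N := perm_mx p)) HF.
  by rewrite -perm_mxM mulVg perm_mx1.
move=> x; have -> : x *m perm_mx p = col_perm (p^-1)%g x by rewrite col_permE invgK.
split.
  case=> H1 H2; split; first exact: PTb.
  by rewrite -H2 -{2}(col_permKV p x) dotv_perm.
case=> H1 H2; split; first by rewrite -(col_permKV p x); apply: PTf.
by rewrite -H2 -{1}(col_permKV p x) dotv_perm.
Qed.

Definition wt T (s : seq 'I_3) : T.-tuple 'I_3 := insubd (nseq_tuple T o0) s.

Lemma wtE T s : size s = T -> tval (wt T s) = s.
Proof. by move=> H; rewrite /wt insubdK //; apply/eqP. Qed.

Definition Wd (k : nat) a h t : (6 * k).-tuple 'I_3 :=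
  wt (6 * k) (a :: h ++ Mid (2 * k - 2) ++ o1 :: t).

Definition common (R : realFieldType) (k : nat) : 'rV[R]_6 :=
  ev R o2 o1 + (2 * k - 2)%:R *: cyc R.

Lemma a_vec_Wd (R : realFieldType) k a h t : (1 <= k)%N -> last a h = o2 ->
  (size h + size t = 4)%N ->
  a_vec R (Wd k a h t) = avs R (a :: h) + avs R (o1 :: t) + common R k.
Proof.
move=> k1 Hl Hs; rewrite a_vec_avs wtE; last by rewrite size_W; lia.
by rewrite avs_W // /common addrA.
Qed.

Lemma valid_Wd k a h t : (1 <= k)%N -> last a h = o2 -> (size h + size t = 4)%N ->
  sorted neq3 (a :: h) -> sorted neq3 (o1 :: t) -> valid_word (Wd k a h t).
Proof.
move=> k1 Hl Hs H1 H2; rewrite validE wtE; last by rewrite size_W; lia.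
exact: sorted_W.
Qed.

Lemma dot_Wd (R : realFieldType) k a h t : (1 <= k)%N -> last a h = o2 ->
  (size h + size t = 4)%N ->
  sorted neq3 (a :: h) -> sorted neq3 (o1 :: t) ->
  dotv (vec_of (c12 R k)) (a_vec R (Wd k a h t)) =
  ps (c12 R k) (a :: h) + ps (c12 R k) (o1 :: t) + 4 * k%:R
   + (2 * k%:R - 2) * 2.
Proof.
move=> k1 Hl Hs H1 H2; rewrite a_vec_Wd // /common /cyc !dotvD dotvZ !dotvD.
rewrite !dot_avs // !dot_ev //.
rewrite natrB ?natrM //; last by lia.
by rewrite /c12 /=; ring.
Qed.

Definition tbl (R : realFieldType) (l : seq (seq R)) : 'M[R]_6 :=
  \matrix_(i, j) nth 0 (nth [::] l i) j.

Definition QP (R : realFieldType) : 'M[R]_6 := tbl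
  [:: [:: 1; -1; 0; 0; 0; 0];
      [:: 1; -2; -1; 1; 1; 0];
      [:: 1; -2; -1; 1; 0; 1];
      [:: 1; -1; -1; 0; 1; 0];
      [:: 0; -1; 0; 0; 0; 1];
      [:: 1; 0; 0; 0; 0; 0]].

Definition QPi (R : realFieldType) : 'M[R]_6 := tbl
  [:: [:: 0; 0; 0; 0; 0; 1];
      [:: -1; 0; 0; 0; 0; 1];
      [:: 0; 1; -1; -1; 1; 1];
      [:: -1; 1; 0; -1; 0; 1];
      [:: -1; 1; -1; 0; 1; 1];
      [:: -1; 0; 0; 0; 1; 1]].

Definition QF (R : realFieldType) : 'M[R]_6 := tbl
  [:: [:: 0; -1; 0; 0; 0; 1];
      [:: 1; -2; 0; 1; 0; 0];
      [:: 0; -1; -1; 1; 1; 0];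
      [:: 0; -2; -1; 2; 0; 1];
      [:: 1; 0; 0; 0; 0; 0];
      [:: 0; 1; 0; 0; 0; 0]].

Definition QFi (R : realFieldType) : 'M[R]_6 := tbl
  [:: [:: 0; 0; 0; 0; 1; 0];
      [:: 0; 0; 0; 0; 0; 1];
      [:: 1; 2; 0; -1; -2; 3];
      [:: 0; 1; 0; 0; -1; 2];
      [:: 1; 1; 1; -1; -1; 2];
      [:: 1; 0; 0; 0; 0; 1]].


Lemma QP_inv (R : realFieldType) : QP R *m QPi R = 1%:M.
Proof.
apply/matrixP => i j; rewrite !mxE sum6 !mxE;
  case: i => [[|[|[|[|[|[|i]]]]]] Hi] //; case: j => [[|[|[|[|[|[|j]]]]]] Hj] //=; ring.
Qed.

Lemma QF_inv (R : realFieldType) : QF R *m QFi R = 1%:M.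
Proof.
apply/matrixP => i j; rewrite !mxE sum6 !mxE;
  case: i => [[|[|[|[|[|[|i]]]]]] Hi] //; case: j => [[|[|[|[|[|[|j]]]]]] Hj] //=; ring.
Qed.

Definition base_w k := Wd k o1 [:: o0; o2] [:: o0; o2].

Lemma base_valid k : (1 <= k)%N -> valid_word (base_w k).
Proof. by move=> k1; apply: valid_Wd. Qed.

Lemma rowP_W (R : realFieldType) k (Q : 'M[R]_6) i a h t :
  (1 <= k)%N -> last a h = o2 -> (size h + size t = 4)%N ->
  sorted neq3 (a :: h) -> sorted neq3 (o1 :: t) ->
  row i Q = avs R (a :: h) + avs R (o1 :: t)
            - (avs R [:: o1; o0; o2] + avs R [:: o1; o0; o2]) ->
  exists x y, [/\ PT (6 * k) x, PT (6 * k) y & row i Q = x - y].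
Proof.
move=> k1 Hl Hs H1 H2 E.
exists (a_vec R (Wd k a h t)), (a_vec R (base_w k)); split.
- by apply: PT_vert; apply: valid_Wd.
- by apply: PT_vert; apply: base_valid.
rewrite E /base_w !a_vec_Wd //.
by apply/rowP => m; rewrite !mxE; ring.
Qed.

Lemma rowF_W (R : realFieldType) k (Q : 'M[R]_6) i a h t :
  (1 <= k)%N -> last a h = o2 -> (size h + size t = 4)%N ->
  sorted neq3 (a :: h) -> sorted neq3 (o1 :: t) ->
  ps (c12 R k) (a :: h) + ps (c12 R k) (o1 :: t) + 4 * k%:R + (2 * k%:R - 2) * 2 = 0 ->
  row i Q = avs R (a :: h) + avs R (o1 :: t)
            - (avs R [:: o1; o0; o2] + avs R [:: o1; o0; o2]) ->
  exists x y, [/\ (PT (6 * k) x /\ dotv (vec_of (c12 R k)) x = 0),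
                  (PT (6 * k) y /\ dotv (vec_of (c12 R k)) y = 0) & row i Q = x - y].
Proof.
move=> k1 Hl Hs H1 H2 Hz E.
exists (a_vec R (Wd k a h t)), (a_vec R (base_w k)); split.
- split; first by apply: PT_vert; apply: valid_Wd.
  by rewrite dot_Wd.
- split; first by apply: PT_vert; apply: base_valid.
  by rewrite /base_w dot_Wd //= /c12 /=; ring.
rewrite E /base_w !a_vec_Wd //.
by apply/rowP => m; rewrite !mxE; ring.
Qed.

Theorem base_facet (R : realFieldType) (k : nat) : (1 <= k)%N ->
  defines_facet (6 * k) (vec_of (c12 R k)).
Proof.
move=> k1; split.
  move=> w Hw; rewrite a_vec_avs dot_avs -?validE //.
  by apply: nonneg; rewrite ?size_tuple // -validE.
split.
  exists (a_vec R (base_w k)); split; first by apply: PT_vert; apply: base_valid.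
  by rewrite /base_w dot_Wd //= /c12 /=; ring.
exists 5%N, 4%N; split; [|split => //].
  apply: (affdim_crit (Q := QP R) (Qi := QPi R)) => //; first exact: QP_inv.
    move=> x y Sx Sy j Hj; have Hx := PT_tot Sx; have Hy := PT_tot Sy.
    move: Hx Hy; rewrite /dotv !sum6 /ones !vecE => Hx Hy.
    case: j Hj => [[|[|[|[|[|[|j]]]]]] Hj] //= _.
    rewrite mxE sum6 !mxE /=; lra.
  move=> i; case: i => [[|[|[|[|[|[|i]]]]]] Hi] //= _.
  - apply: (@rowP_W _ _ _ _ o0 [:: o1; o0; o2] [:: o0]) => //.
    apply/rowP => m; rewrite /= /ev /vec_of !mxE !pairE.
    by case: m => [[|[|[|[|[|[|m]]]]]] Hm] //=; ring.
  - apply: (@rowP_W _ _ _ _ o2 [:: o0; o1; o2] [:: o0]) => //.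
    apply/rowP => m; rewrite /= /ev /vec_of !mxE !pairE.
    by case: m => [[|[|[|[|[|[|m]]]]]] Hm] //=; ring.
  - apply: (@rowP_W _ _ _ _ o2 [:: o1; o2] [:: o0; o1]) => //.
    apply/rowP => m; rewrite /= /ev /vec_of !mxE !pairE.
    by case: m => [[|[|[|[|[|[|m]]]]]] Hm] //=; ring.
  - apply: (@rowP_W _ _ _ _ o2 [:: o0; o2] [:: o0; o1]) => //.
    apply/rowP => m; rewrite /= /ev /vec_of !mxE !pairE.
    by case: m => [[|[|[|[|[|[|m]]]]]] Hm] //=; ring.
  - apply: (@rowP_W _ _ _ _ o2 [:: o1; o0; o2] [:: o0]) => //.
    apply/rowP => m; rewrite /= /ev /vec_of !mxE !pairE.
    by case: m => [[|[|[|[|[|[|m]]]]]] Hm] //=; ring.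
apply: (affdim_crit (Q := QF R) (Qi := QFi R)) => //; first exact: QF_inv.
  move=> x y [Sx Cx] [Sy Cy] j Hj; have Hx := PT_tot Sx; have Hy := PT_tot Sy.
  move: Hx Hy Cx Cy; rewrite /dotv !sum6 /ones !vecE /= /c12 /= => Hx Hy Cx Cy.
  have G0 : (6 * k%:R - 1) *
     ((x 0 j0 - 2 * x 0 j2 - x 0 j3 - x 0 j4) - (y 0 j0 - 2 * y 0 j2 - y 0 j3 - y 0 j4)) = 0 :> R.
    rewrite -[RHS](_ : (0 - 0) - 4 * k%:R * ((6 * k)%N.-1%:R - (6 * k)%N.-1%:R) = 0);
      last by ring.
    rewrite -{1}Cx -{1}Cy -{1}Hx -{1}Hy; ring.
  have kR : 1 <= k%:R :> R by rewrite ler1n.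
  have G : (x 0 j0 - 2 * x 0 j2 - x 0 j3 - x 0 j4) - (y 0 j0 - 2 * y 0 j2 - y 0 j3 - y 0 j4) = 0.
    move: G0 => /eqP; rewrite mulf_eq0 => /orP [/eqP H|/eqP //]; lra.
  case: j Hj => [[|[|[|[|[|[|j]]]]]] Hj] //= _;
    rewrite mxE sum6 !mxE /=; lra.
move=> i; case: i => [[|[|[|[|[|[|i]]]]]] Hi] //= _.
- apply: (@rowF_W _ _ _ _ o2 [::] [:: o0; o2; o1; o0]) => //.
    by rewrite /= /c12 /=; ring.
  apply/rowP => m; rewrite /= /ev /vec_of !mxE !pairE.
  by case: m => [[|[|[|[|[|[|m]]]]]] Hm] //=; ring.
- apply: (@rowF_W _ _ _ _ o1 [:: o2] [:: o0; o1; o0]) => //.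
    by rewrite /= /c12 /=; ring.
  apply/rowP => m; rewrite /= /ev /vec_of !mxE !pairE.
  by case: m => [[|[|[|[|[|[|m]]]]]] Hm] //=; ring.
- apply: (@rowF_W _ _ _ _ o1 [:: o0; o2] [:: o2; o0]) => //.
    by rewrite /= /c12 /=; ring.
  apply/rowP => m; rewrite /= /ev /vec_of !mxE !pairE.
  by case: m => [[|[|[|[|[|[|m]]]]]] Hm] //=; ring.
- apply: (@rowF_W _ _ _ _ o1 [:: o2] [:: o2; o1; o0]) => //.
    by rewrite /= /c12 /=; ring.
  apply/rowP => m; rewrite /= /ev /vec_of !mxE !pairE.
  by case: m => [[|[|[|[|[|[|m]]]]]] Hm] //=; ring.
Qed.

Unset Implicit Arguments.

Theorem proposition12 (R : realFieldType) (k : nat) (s : 'S_3) :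
  (1 <= k)%N ->
  defines_facet (6 * k) (vec_of (act_pairs s (c12 R k))).
Proof.
move=> k1; rewrite vec_act.
apply: (@facet_transfer R (6 * k) _ _ (map_tuple (s^-1)%g) (map_tuple s)).
- by move=> w; apply: val_inj; rewrite /= (mapK (permKV s)).
- by move=> w; apply: val_inj; rewrite /= (mapK (permK s)).
- by move=> w; apply: valid_map; apply: perm_inj.
- by move=> w; apply: a_vec_map.
exact: base_facet.
Qed.
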